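(* Let $f^+:[0,1]\to[0,1]$ be monotonically non-decreasing and piecewise convex, $f^-:[0,1]\to[0,1]$ monotonically non-decreasing and piecewise concave, and $f^\circ:[0,1]\to[0,1]$ monotonically non-decreasing. Let $A^+$ be the set of endpoints of the convex pieces of $f^+$ and $A^-$ the set of endpoints of the concave pieces of $f^-$ (so $\{0,1\}\subseteq A^+$ and $\{0,1\}\subseteq A^-$). Fix $\alpha>0$ and a sign pattern $(s_{uv},s_{vw},s_{uw})\in\{+,-,\varnothing\}^3$. If $\alpha LP(uvw)-ALG(uvw)<0$ for some edge lengths $(x^*_{uv},x^*_{vw},x^*_{uw})\in[0,1]^3$ satisfying the triangle inequalities, then there exist edge lengths $(x_{uv},x_{vw},x_{uw})\in[0,1]^3$ satisfying the triangle inequalities with $\alpha LP(uvw)-ALG(uvw)<0$ such that either (1) one of the triangle inequalities holds with equality, or (2) the lengths of all positive edges lie in $A^+$, the lengths of all negative edges lie in $A^-$, and the lengths of all neutral edges lie in $\{0,1\}$.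
   Context: A triangle $uvw$ has three pairs $uv,vw,uw$, each with a sign $s_e\in\{+,-,\varnothing\}$ (positive edge, negative edge, or neutral/no edge) and a length $x_e\in[0,1]$; the triangle inequalities are $x_{uv}\le x_{vw}+x_{uw}$, $x_{vw}\le x_{uv}+x_{uw}$, $x_{uw}\le x_{uv}+x_{vw}$. Let $p_e=f^{s_e}(x_e)$, where $f^{\varnothing}=f^\circ$. For a pair $(u,v)$ with third vertex $w$: $e.cost_w(u,v)=p_{uw}(1-p_{vw})+(1-p_{uw})p_{vw}$ if $s_{uv}=+$, $(1-p_{uw})(1-p_{vw})$ if $s_{uv}=-$, $0$ if $s_{uv}=\varnothing$; $e.lp_w(u,v)=(1-p_{uw}p_{vw})x_{uv}$ if $s_{uv}=+$, $(1-p_{uw}p_{vw})(1-x_{uv})$ if $s_{uv}=-$, $0$ if $s_{uv}=\varnothing$. Then $ALG(uvw)=e.cost_w(u,v)+e.cost_v(w,u)+e.cost_u(v,w)$ and $LP(uvw)=e.lp_w(u,v)+e.lp_v(w,u)+e.lp_u(v,w)$. *)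

(* Defs.v *)
From Stdlib Require Import Reals Lra List Sorted.
Import ListNotations.
Open Scope R_scope.

Inductive esign := Pos | Neg | Neu.

Definition in01 (x : R) : Prop := 0 <= x <= 1.

Definition mono01 (f : R -> R) : Prop :=
  (forall x, in01 x -> in01 (f x)) /\
  (forall x y, in01 x -> in01 y -> x <= y -> f x <= f y).

Definition convex_on (f : R -> R) (a b : R) : Prop :=
  forall x y t, a <= x <= b -> a <= y <= b -> 0 <= t <= 1 ->
    f (t * x + (1 - t) * y) <= t * f x + (1 - t) * f y.

Definition concave_on (f : R -> R) (a b : R) : Prop :=
  forall x y t, a <= x <= b -> a <= y <= b -> 0 <= t <= 1 ->
    t * f x + (1 - t) * f y <= f (t * x + (1 - t) * y).

(* A = [a_0; ...; a_k] with 0 = a_0 < a_1 < ... < a_k = 1 is a decomposition of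
   [0,1] into pieces [a_i, a_{i+1}] on each of which f has property P;
   A is the set of endpoints of the pieces. *)
Definition piecewise (P : (R -> R) -> R -> R -> Prop) (f : R -> R) (A : list R) : Prop :=
  Sorted Rlt A /\ hd_error A = Some 0 /\ last A 0 = 1 /\
  forall i, (S i < length A)%nat -> P f (nth i A 0) (nth (S i) A 0).

Definition piecewise_convex := piecewise convex_on.
Definition piecewise_concave := piecewise concave_on.

Definition pval (fp fm fo : R -> R) (s : esign) (x : R) : R :=
  match s with Pos => fp x | Neg => fm x | Neu => fo x end.

(* e.cost_w(u,v) for pair uv with sign s, where q1 = p_uw, q2 = p_vw *)
Definition ecost (s : esign) (q1 q2 : R) : R :=
  match s with
  | Pos => q1 * (1 - q2) + (1 - q1) * q2
  | Neg => (1 - q1) * (1 - q2)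
  | Neu => 0
  end.

(* e.lp_w(u,v) for pair uv with sign s and length x, where q1 = p_uw, q2 = p_vw *)
Definition elp (s : esign) (x q1 q2 : R) : R :=
  match s with
  | Pos => (1 - q1 * q2) * x
  | Neg => (1 - q1 * q2) * (1 - x)
  | Neu => 0
  end.

(* Edges: 1 = uv, 2 = vw, 3 = uw. *)
Definition ALG (fp fm fo : R -> R) (s1 s2 s3 : esign) (x1 x2 x3 : R) : R :=
  let p1 := pval fp fm fo s1 x1 in
  let p2 := pval fp fm fo s2 x2 in
  let p3 := pval fp fm fo s3 x3 in
  ecost s1 p3 p2 + ecost s2 p1 p3 + ecost s3 p1 p2.

Definition LP (fp fm fo : R -> R) (s1 s2 s3 : esign) (x1 x2 x3 : R) : R :=
  let p1 := pval fp fm fo s1 x1 in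
  let p2 := pval fp fm fo s2 x2 in
  let p3 := pval fp fm fo s3 x3 in
  elp s1 x1 p3 p2 + elp s2 x2 p1 p3 + elp s3 x3 p1 p2.

Definition tri_ineq (x1 x2 x3 : R) : Prop :=
  x1 <= x2 + x3 /\ x2 <= x1 + x3 /\ x3 <= x1 + x2.

Definition tight (x1 x2 x3 : R) : Prop :=
  x1 = x2 + x3 \/ x2 = x1 + x3 \/ x3 = x1 + x2.

Definition at_breakpoint (Ap Am : list R) (s : esign) (x : R) : Prop :=
  match s with
  | Pos => In x Ap
  | Neg => In x Am
  | Neu => x = 0 \/ x = 1
  end.

(* Main.v *)
Require Import Defs.
From Stdlib Require Import Reals List Lra Psatz.
Import ListNotations.
Open Scope R_scope.

Definition Gf fp fm fo alpha s1 s2 s3 x1 x2 x3 :=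
  alpha * LP fp fm fo s1 s2 s3 x1 x2 x3 - ALG fp fm fo s1 s2 s3 x1 x2 x3.

Lemma in_last (l : list R) d : l <> [] -> In (last l d) l.
Proof.
  induction l as [|a l IH]; intros H; [congruence|].
  destruct l as [|b l]; simpl; [now left|].
  right. apply IH. discriminate.
Qed.

Lemma find_piece_gen t : forall l a, a <= t -> t <= last (a :: l) 0 -> l <> [] ->
  exists i, (S i < length (a :: l))%nat /\ nth i (a :: l) 0 <= t <= nth (S i) (a :: l) 0.
Proof.
  induction l as [|b l IH]; intros a H1 H2 Hne; [congruence|].
  destruct (Rle_or_lt t b) as [Hb|Hb].
  - exists 0%nat. simpl. split; [lia|lra].
  - destruct l as [|c l].
    + simpl in H2. lra.
    + assert (H2' : t <= last (b :: c :: l) 0) by exact H2.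
      destruct (IH b ltac:(lra) H2' ltac:(discriminate)) as [i [Hi1 Hi2]].
      exists (S i). simpl in *. split; [lia|exact Hi2].
Qed.

Lemma piece_props P f A : piecewise P f A -> In 0 A /\ In 1 A /\
  forall t, 0 <= t <= 1 -> exists i, (S i < length A)%nat /\
     nth i A 0 <= t <= nth (S i) A 0.
Proof.
  intros [_ [Hh [Hl _]]].
  destruct A as [|a l]; [discriminate|].
  simpl in Hh. injection Hh as ->.
  split; [now left|]. split.
  - rewrite <- Hl. apply in_last. discriminate.
  - intros t Ht. apply find_piece_gen; try lra.
    destruct l; [simpl in Hl; lra| discriminate].
Qed.

Lemma concave_min (h : R -> R) l u t0 : l <= t0 <= u ->
  (forall x y k, l <= x <= u -> l <= y <= u -> 0 <= k <= 1 ->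
     k * h x + (1 - k) * h y <= h (k * x + (1 - k) * y)) ->
  h l <= h t0 \/ h u <= h t0.
Proof.
  intros Ht Hc.
  destruct (Req_dec l u) as [E|E].
  - left. assert (t0 = l) by lra. subst. lra.
  - set (k := (u - t0) / (u - l)).
    assert (Hk : 0 <= k <= 1).
    { unfold k. split.
      - unfold Rdiv. apply Rmult_le_pos; [lra|]. apply Rlt_le, Rinv_0_lt_compat; lra.
      - apply Rmult_le_reg_r with (u - l); [lra|].
        unfold Rdiv. rewrite Rmult_assoc, Rinv_l by lra. lra. }
    assert (Ht0 : k * l + (1 - k) * u = t0) by (unfold k; field; lra).
    pose proof (Hc l u k ltac:(lra) ltac:(lra) Hk) as H. rewrite Ht0 in H.
    destruct (Rle_or_lt (h l) (h t0)); [now left|].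
    destruct (Rle_or_lt (h u) (h t0)); [now right|].
    exfalso.
    assert (A1 : 0 <= k * (h l - h t0)) by (apply Rmult_le_pos; lra).
    assert (A2 : 0 <= (1 - k) * (h u - h t0)) by (apply Rmult_le_pos; lra).
    destruct (Rlt_or_le 0 k) as [Hk0|Hk0].
    + assert (0 < k * (h l - h t0)) by (apply Rmult_lt_0_compat; lra). lra.
    + assert (Ek : k = 0) by lra. rewrite Ek in H. lra.
Qed.

Lemma mono_le f x y : mono01 f -> in01 x -> in01 y -> x <= y -> f x <= f y.
Proof. intros [_ H]; apply H. Qed.

Lemma stepPos (h : R -> R) a K c fp Ap L U t0 : mono01 fp -> piecewise_convex fp Ap ->
  0 <= a -> (forall t, h t = a * t + K * fp t + c) ->
  0 <= L -> L <= t0 <= U -> U <= 1 -> h t0 < 0 ->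
  exists t, L <= t <= U /\ h t < 0 /\ (t = L \/ t = U \/ In t Ap).
Proof.
  intros Hm Hp Ha Hh HL Ht HU H0.
  destruct (Rlt_or_le K 0) as [HK|HK].
  - destruct (piece_props _ _ _ Hp) as [_ [_ Hpc]].
    destruct (Hpc t0 ltac:(lra)) as [i [Hi Hti]].
    destruct Hp as [_ [_ [_ Hcv]]]. specialize (Hcv i Hi).
    set (ai := nth i Ap 0) in *. set (bi := nth (S i) Ap 0) in *.
    assert (Hai : In ai Ap) by (apply nth_In; lia).
    assert (Hbi : In bi Ap) by (apply nth_In; lia).
    set (l := Rmax L ai). set (u := Rmin U bi).
    assert (Hl1 : L <= l) by apply Rmax_l. assert (Hl2 : ai <= l) by apply Rmax_r.
    assert (Hu1 : u <= U) by apply Rmin_l. assert (Hu2 : u <= bi) by apply Rmin_r.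
    assert (Hlt : l <= t0) by (apply Rmax_lub; lra).
    assert (Hut : t0 <= u) by (apply Rmin_glb; lra).
    assert (Hlu : l = L \/ l = ai) by (unfold l, Rmax; destruct Rle_dec; auto).
    assert (Huu : u = U \/ u = bi) by (unfold u, Rmin; destruct Rle_dec; auto).
    destruct (concave_min h l u t0 ltac:(lra)) as [E|E].
    + intros x y k Hx Hy Hk. rewrite !Hh.
      pose proof (Hcv x y k ltac:(lra) ltac:(lra) Hk) as Hc.
      assert (E : k * (a * x + K * fp x + c) + (1 - k) * (a * y + K * fp y + c) =
        a * (k * x + (1 - k) * y) + K * (k * fp x + (1 - k) * fp y) + c) by ring.
      rewrite E.
      assert (K * (k * fp x + (1 - k) * fp y) <= K * fp (k * x + (1 - k) * y))
        by (apply Rmult_le_compat_neg_l; lra).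
      lra.
    + exists l. split; [lra|]. split; [lra|]. destruct Hlu as [->| ->]; auto.
    + exists u. split; [lra|]. split; [lra|]. destruct Huu as [->| ->]; auto.
  - exists L. split; [lra|]. split; [|auto].
    assert (fp L <= fp t0) by (apply (mono_le fp); [exact Hm|unfold in01; lra..]).
    rewrite Hh in *. nra.
Qed.

Lemma stepNeg (h : R -> R) a K c fm Am L U t0 : mono01 fm -> piecewise_concave fm Am ->
  a <= 0 -> (forall t, h t = a * t + K * fm t + c) ->
  0 <= L -> L <= t0 <= U -> U <= 1 -> h t0 < 0 ->
  exists t, L <= t <= U /\ h t < 0 /\ (t = L \/ t = U \/ In t Am).
Proof.
  intros Hm Hp Ha Hh HL Ht HU H0.
  destruct (Rlt_or_le 0 K) as [HK|HK].
  - destruct (piece_props _ _ _ Hp) as [_ [_ Hpc]].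
    destruct (Hpc t0 ltac:(lra)) as [i [Hi Hti]].
    destruct Hp as [_ [_ [_ Hcv]]]. specialize (Hcv i Hi).
    set (ai := nth i Am 0) in *. set (bi := nth (S i) Am 0) in *.
    assert (Hai : In ai Am) by (apply nth_In; lia).
    assert (Hbi : In bi Am) by (apply nth_In; lia).
    set (l := Rmax L ai). set (u := Rmin U bi).
    assert (Hl1 : L <= l) by apply Rmax_l. assert (Hl2 : ai <= l) by apply Rmax_r.
    assert (Hu1 : u <= U) by apply Rmin_l. assert (Hu2 : u <= bi) by apply Rmin_r.
    assert (Hlt : l <= t0) by (apply Rmax_lub; lra).
    assert (Hut : t0 <= u) by (apply Rmin_glb; lra).
    assert (Hlu : l = L \/ l = ai) by (unfold l, Rmax; destruct Rle_dec; auto).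
    assert (Huu : u = U \/ u = bi) by (unfold u, Rmin; destruct Rle_dec; auto).
    destruct (concave_min h l u t0 ltac:(lra)) as [E|E].
    + intros x y k Hx Hy Hk. rewrite !Hh.
      pose proof (Hcv x y k ltac:(lra) ltac:(lra) Hk) as Hc.
      assert (E : k * (a * x + K * fm x + c) + (1 - k) * (a * y + K * fm y + c) =
        a * (k * x + (1 - k) * y) + K * (k * fm x + (1 - k) * fm y) + c) by ring.
      rewrite E.
      assert (K * (k * fm x + (1 - k) * fm y) <= K * fm (k * x + (1 - k) * y))
        by (apply Rmult_le_compat_l; lra).
      lra.
    + exists l. split; [lra|]. split; [lra|]. destruct Hlu as [->| ->]; auto.
    + exists u. split; [lra|]. split; [lra|]. destruct Huu as [->| ->]; auto.
  - exists U. split; [lra|]. split; [|auto].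
    assert (fm t0 <= fm U) by (apply (mono_le fm); [exact Hm|unfold in01; lra..]).
    rewrite Hh in *. nra.
Qed.

Lemma stepNeu (h : R -> R) K c fo L U t0 : mono01 fo ->
  (forall t, h t = K * fo t + c) ->
  0 <= L -> L <= t0 <= U -> U <= 1 -> h t0 < 0 ->
  exists t, L <= t <= U /\ h t < 0 /\ (t = L \/ t = U).
Proof.
  intros Hm Hh HL Ht HU H0.
  destruct (Rlt_or_le K 0) as [HK|HK].
  - exists U. split; [lra|]. split; [|auto].
    assert (fo t0 <= fo U) by (apply (mono_le fo); [exact Hm|unfold in01; lra..]).
    rewrite Hh in *. nra.
  - exists L. split; [lra|]. split; [|auto].
    assert (fo L <= fo t0) by (apply (mono_le fo); [exact Hm|unfold in01; lra..]).
    rewrite Hh in *. nra.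
Qed.

Lemma pval_in01 fp fm fo s x : mono01 fp -> mono01 fm -> mono01 fo -> in01 x ->
  in01 (pval fp fm fo s x).
Proof. intros [H1 _] [H2 _] [H3 _] Hx; destruct s; simpl; auto. Qed.

Lemma decomp fp fm fo alpha s1 s2 s3 x2 x3 t :
  let p2 := pval fp fm fo s2 x2 in let p3 := pval fp fm fo s3 x3 in
  Gf fp fm fo alpha s1 s2 s3 t x2 x3 =
  alpha * elp s1 t p3 p2 - ecost s1 p3 p2
  + (alpha * (elp s2 x2 0 p3 + elp s3 x3 0 p2) - (ecost s2 0 p3 + ecost s3 0 p2))
  + (alpha * ((elp s2 x2 1 p3 - elp s2 x2 0 p3) + (elp s3 x3 1 p2 - elp s3 x3 0 p2))
     - ((ecost s2 1 p3 - ecost s2 0 p3) + (ecost s3 1 p2 - ecost s3 0 p2)))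
    * pval fp fm fo s1 t.
Proof.
  intros p2 p3. unfold Gf, LP, ALG. fold p2 p3.
  destruct s1, s2, s3; simpl; ring.
Qed.

Lemma bp0 P Q f g Ap Am s : piecewise P f Ap -> piecewise Q g Am -> at_breakpoint Ap Am s 0.
Proof.
  intros H1 H2. destruct (piece_props _ _ _ H1) as [? _].
  destruct (piece_props _ _ _ H2) as [? _]. destruct s; simpl; auto.
Qed.

Lemma bp1 P Q f g Ap Am s : piecewise P f Ap -> piecewise Q g Am -> at_breakpoint Ap Am s 1.
Proof.
  intros H1 H2. destruct (piece_props _ _ _ H1) as [_ [? _]].
  destruct (piece_props _ _ _ H2) as [_ [? _]]. destruct s; simpl; auto.
Qed.

Lemma coord1 fp fm fo Ap Am alpha s1 s2 s3 x1 x2 x3 :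
  mono01 fp -> piecewise_convex fp Ap ->
  mono01 fm -> piecewise_concave fm Am ->
  mono01 fo -> 0 < alpha ->
  in01 x1 -> in01 x2 -> in01 x3 -> tri_ineq x1 x2 x3 ->
  Gf fp fm fo alpha s1 s2 s3 x1 x2 x3 < 0 ->
  exists t, in01 t /\ tri_ineq t x2 x3 /\ Gf fp fm fo alpha s1 s2 s3 t x2 x3 < 0 /\
    (tight t x2 x3 \/ at_breakpoint Ap Am s1 t).
Proof.
  intros Hmp Hpp Hmm Hpm Hmo Ha H1 H2 H3 Htri HG.
  set (L := Rmax 0 (Rmax (x2 - x3) (x3 - x2))).
  set (U := Rmin 1 (x2 + x3)).
  unfold in01, tri_ineq in *.
  assert (HL0 : 0 <= L) by apply Rmax_l.
  assert (HLa : x2 - x3 <= L) by (eapply Rle_trans; [apply Rmax_l|apply Rmax_r]).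
  assert (HLb : x3 - x2 <= L) by (eapply Rle_trans; [apply Rmax_r|apply Rmax_r]).
  assert (HU1 : U <= 1) by apply Rmin_l.
  assert (HU2 : U <= x2 + x3) by apply Rmin_r.
  assert (HLx : L <= x1).
  { apply Rmax_lub; [lra|]. apply Rmax_lub; lra. }
  assert (HUx : x1 <= U) by (apply Rmin_glb; lra).
  assert (HLc : L = 0 \/ L = x2 - x3 \/ L = x3 - x2).
  { unfold L, Rmax. destruct Rle_dec; destruct Rle_dec; auto. }
  assert (HUc : U = 1 \/ U = x2 + x3) by (unfold U, Rmin; destruct Rle_dec; auto).
  pose proof (pval_in01 fp fm fo s2 x2 Hmp Hmm Hmo H2) as Hp2.
  pose proof (pval_in01 fp fm fo s3 x3 Hmp Hmm Hmo H3) as Hp3.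
  unfold in01 in Hp2, Hp3.
  set (p2 := pval fp fm fo s2 x2) in *. set (p3 := pval fp fm fo s3 x3) in *.
  set (C := alpha * (elp s2 x2 0 p3 + elp s3 x3 0 p2) - (ecost s2 0 p3 + ecost s3 0 p2)).
  set (K := alpha * ((elp s2 x2 1 p3 - elp s2 x2 0 p3) + (elp s3 x3 1 p2 - elp s3 x3 0 p2))
     - ((ecost s2 1 p3 - ecost s2 0 p3) + (ecost s3 1 p2 - ecost s3 0 p2))).
  assert (Hd : forall t, Gf fp fm fo alpha s1 s2 s3 t x2 x3 =
     alpha * elp s1 t p3 p2 - ecost s1 p3 p2 + C + K * pval fp fm fo s1 t)
    by (intros t; apply decomp).
  assert (Hq : 0 <= 1 - p3 * p2) by nra.
  assert (Hfin : forall t, L <= t <= U -> Gf fp fm fo alpha s1 s2 s3 t x2 x3 < 0 ->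
     (t = L \/ t = U \/ at_breakpoint Ap Am s1 t) ->
     exists t, (0 <= t <= 1) /\ (t <= x2 + x3 /\ x2 <= t + x3 /\ x3 <= t + x2) /\
       Gf fp fm fo alpha s1 s2 s3 t x2 x3 < 0 /\ (tight t x2 x3 \/ at_breakpoint Ap Am s1 t)).
  { intros t Ht Hg Hc. exists t. split; [lra|]. split; [lra|]. split; [exact Hg|].
    unfold tight. destruct Hc as [Hc|[Hc|Hc]].
    - destruct HLc as [E|[E|E]].
      + right. rewrite Hc, E. eapply bp0; eauto.
      + left. right. left. lra.
      + left. right. right. lra.
    - destruct HUc as [E|E].
      + right. rewrite Hc, E. eapply bp1; eauto.
      + left. left. lra.
    - right. exact Hc. }
  destruct s1.
  - destruct (stepPos (fun t => Gf fp fm fo alpha Pos s2 s3 t x2 x3) (alpha * (1 - p3 * p2)) K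
      (- ecost Pos p3 p2 + C) fp Ap L U x1 Hmp Hpp ltac:(apply Rmult_le_pos; lra)) as [t [Ht [Hg Hc]]];
      [intros t; rewrite Hd; simpl; ring|lra|lra|lra|exact HG|].
    + apply Hfin with t; auto; destruct Hc as [?|[?|?]]; auto.
  - destruct (stepNeg (fun t => Gf fp fm fo alpha Neg s2 s3 t x2 x3) (- (alpha * (1 - p3 * p2))) K
      (alpha * (1 - p3 * p2) - ecost Neg p3 p2 + C) fm Am L U x1 Hmm Hpm ltac:(assert (0 <= alpha * (1 - p3 * p2)) by (apply Rmult_le_pos; lra); lra)) as [t [Ht [Hg Hc]]];
      [intros t; rewrite Hd; simpl; ring|lra|lra|lra|exact HG|].
    + apply Hfin with t; auto; destruct Hc as [?|[?|?]]; auto.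
  - destruct (stepNeu (fun t => Gf fp fm fo alpha Neu s2 s3 t x2 x3) K
      (- ecost Neu p3 p2 + C) fo L U x1 Hmo) as [t [Ht [Hg Hc]]];
      [intros t; rewrite Hd; simpl; ring|lra|lra|lra|exact HG|].
    + apply Hfin with t; auto; destruct Hc as [?|?]; auto.
Qed.

Lemma G_swap12 fp fm fo alpha s1 s2 s3 x1 x2 x3 :
  Gf fp fm fo alpha s1 s2 s3 x1 x2 x3 = Gf fp fm fo alpha s2 s1 s3 x2 x1 x3.
Proof. unfold Gf, LP, ALG. destruct s1, s2, s3; simpl; ring. Qed.

Lemma G_swap13 fp fm fo alpha s1 s2 s3 x1 x2 x3 :
  Gf fp fm fo alpha s1 s2 s3 x1 x2 x3 = Gf fp fm fo alpha s3 s2 s1 x3 x2 x1.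
Proof. unfold Gf, LP, ALG. destruct s1, s2, s3; simpl; ring. Qed.

Theorem lemma2 (fp fm fo : R -> R) (Ap Am : list R) (alpha : R)
  (s1 s2 s3 : esign) :
  mono01 fp -> piecewise_convex fp Ap ->
  mono01 fm -> piecewise_concave fm Am ->
  mono01 fo ->
  0 < alpha ->
  (exists y1 y2 y3, in01 y1 /\ in01 y2 /\ in01 y3 /\ tri_ineq y1 y2 y3 /\
     alpha * LP fp fm fo s1 s2 s3 y1 y2 y3 - ALG fp fm fo s1 s2 s3 y1 y2 y3 < 0) ->
  exists x1 x2 x3, in01 x1 /\ in01 x2 /\ in01 x3 /\ tri_ineq x1 x2 x3 /\
     alpha * LP fp fm fo s1 s2 s3 x1 x2 x3 - ALG fp fm fo s1 s2 s3 x1 x2 x3 < 0 /\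
     (tight x1 x2 x3 \/
      (at_breakpoint Ap Am s1 x1 /\ at_breakpoint Ap Am s2 x2 /\
       at_breakpoint Ap Am s3 x3)).
Proof.
  intros Hmp Hpp Hmm Hpm Hmo Ha [y1 [y2 [y3 [H1 [H2 [H3 [Ht HG]]]]]]].
  fold (Gf fp fm fo alpha s1 s2 s3 y1 y2 y3) in HG.
  destruct (coord1 fp fm fo Ap Am alpha s1 s2 s3 y1 y2 y3 Hmp Hpp Hmm Hpm Hmo Ha H1 H2 H3 Ht HG)
    as [t1 [Ht1 [Htr1 [HG1 [Hti1|Hb1]]]]].
  { exists t1, y2, y3. unfold Gf in HG1. auto 10. }
  rewrite G_swap12 in HG1.
  assert (Htr1' : tri_ineq y2 t1 y3) by (unfold tri_ineq in *; lra).
  destruct (coord1 fp fm fo Ap Am alpha s2 s1 s3 y2 t1 y3 Hmp Hpp Hmm Hpm Hmo Ha H2 Ht1 H3 Htr1' HG1)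
    as [t2 [Ht2 [Htr2 [HG2 [Hti2|Hb2]]]]].
  { exists t1, t2, y3. rewrite G_swap12 in HG2. unfold Gf in HG2.
    split; [auto|]. split; [auto|]. split; [auto|]. split; [unfold tri_ineq in *; lra|].
    split; [exact HG2|]. left. unfold tight in *; lra. }
  rewrite G_swap12, G_swap13 in HG2.
  assert (Htr2' : tri_ineq y3 t2 t1) by (unfold tri_ineq in *; lra).
  destruct (coord1 fp fm fo Ap Am alpha s3 s2 s1 y3 t2 t1 Hmp Hpp Hmm Hpm Hmo Ha H3 Ht2 Ht1 Htr2' HG2)
    as [t3 [Ht3 [Htr3 [HG3 Hc3]]]].
  rewrite G_swap13 in HG3. unfold Gf in HG3.
  exists t1, t2, t3. split; [auto|]. split; [auto|]. split; [auto|].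
  split; [unfold tri_ineq in *; lra|]. split; [exact HG3|].
  destruct Hc3 as [Hc3|Hc3].
  - left. unfold tight in *. lra.
  - right. auto.
Qed.
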